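(* Let $E=(E^0,E^1,r,s)$ be a graph. (a) Let $k$ be a field. If $\alpha,\beta\in\partial E$ and there exists a nonzero $k$-linear map $T:V_{([\alpha],k)}\to V_{([\beta],k)}$ such that $T\circ\rho_{([\alpha],k)}(a)=\rho_{([\beta],k)}(a)\circ T$ for all $a\in L_k(E)$, then $[\alpha]=[\beta]$ and $T=z\,\mathrm{Id}_{V_{([\alpha],k)}}$ for some $z\in k$. Consequently, for any $\alpha,\beta\in\partial E$ with $[\alpha]\ne[\beta]$ we have $\mathrm{End}_{L_k(E)}V_{([\alpha],k)}\cong k$ and $\mathrm{Hom}_{L_k(E)}(V_{([\alpha],k)},V_{([\beta],k)})=\{0\}$. (b) If $\alpha,\beta\in\partial E$ and there exists a nonzero bounded linear map $T:\mathcal{H}_{[\alpha]}\to\mathcal{H}_{[\beta]}$ such that $T\circ\pi_{[\alpha]}(a)=\pi_{[\beta]}(a)\circ T$ for all $a\in C^*(E)$, then $[\alpha]=[\beta]$ and $T=z\,\mathrm{Id}_{\mathcal{H}_{[\alpha]}}$ for some $z\in\mathbb{C}$. Consequently, for any $\alpha,\beta\in\partial E$ with $[\alpha]\neq[\beta]$ we have $\mathrm{End}_{C^*(E)}\mathcal{H}_{[\alpha]}\cong\mathbb{C}$, $\mathrm{Unitary}_{C^*(E)}\mathcal{H}_{[\alpha]}\cong\mathbb{T}$, and $\mathrm{Hom}_{C^*(E)}(\mathcal{H}_{[\alpha]},\mathcal{H}_{[\beta]})=\{0\}$.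
   Context: A graph $E=(E^0,E^1,r,s)$ has vertex set $E^0$, edge set $E^1$, range and source maps; no countability assumed. A vertex is singular if it emits no edges or infinitely many edges, regular otherwise. Finite paths include vertices (length $0$) and sequences $e_1\cdots e_n$ with $r(e_i)=s(e_{i+1})$; infinite paths are sequences $e_1e_2\cdots$. Boundary paths $\partial E$: infinite paths together with finite paths whose range is singular. The shift $\sigma_E$ removes the first edge (fixes vertices; sends a single edge $e$ to $r(e)$); $\alpha,\beta\in\partial E$ are shift-tail equivalent if $\sigma_E^m(\alpha)=\sigma_E^n(\beta)$ for some $m,n\in\mathbb{N}$; $[\alpha]$ is the class. $L_k(E)$: universal $k$-algebra generated by pairwise orthogonal idempotents $p_v$ and elements $s_e,s_e^*$ with $p_{s(e)}s_e=s_e=s_ep_{r(e)}$, $p_{r(e)}s_e^*=s_e^*=s_e^*p_{s(e)}$, $s_e^*s_f=\delta_{e,f}p_{r(e)}$, $p_v=\sum_{s(e)=v}s_es_e^*$ for regular $v$. $C^*(E)$: universal $C^*$-algebra generated by mutually orthogonal projections $p_v$ and partial isometries $s_e$ with mutually orthogonal ranges, $s_e^*s_e=p_{r(e)}$, $s_es_e^*\le p_{s(e)}$, $p_v=\sum_{s(e)=v}s_es_e^*$ for regular $v$. $V_{(\partial E,k)}$ is the $k$-vector space with basis $\partial E$, $\mathcal{H}_{\partial E}=\ell^2(\partial E)$. $\rho_{E,k}$ and $\pi_E$ are the representations on these spaces given on $\alpha\in\partial E$ by: $p_v\alpha=\alpha$ if $s(\alpha)=v$, else $0$; $s_e\alpha=e\alpha$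 if $s(\alpha)=r(e)$, else $0$; $s_e^*\alpha=\alpha'$ if $\alpha=e\alpha'$, else $0$. $V_{([\alpha],k)}=\mathrm{span}_k[\alpha]$ and $\mathcal{H}_{[\alpha]}=\ell^2([\alpha])$ are invariant subspaces; $\rho_{([\alpha],k)}$ and $\pi_{[\alpha]}$ are the restrictions to them. $\mathrm{End}_{A}$, $\mathrm{Hom}_{A}$ denote (bounded, in the Hilbert case) linear maps intertwining the representations, and $\mathrm{Unitary}_{C^*(E)}\mathcal{H}_{[\alpha]}$ the group of intertwining unitaries; $\mathbb{T}=\{z\in\mathbb{C}:|z|=1\}$. *)

(* Defs.v *)
From HB Require Import structures.
From mathcomp Require Import all_boot all_order all_algebra.
From mathcomp Require Import boolp classical_sets functions cardinality reals ereal esum.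
From mathcomp Require Import complex.

Set Implicit Arguments.
Unset Strict Implicit.
Unset Printing Implicit Defensive.

Import Order.TTheory GRing.Theory Num.Theory.
Local Open Scope classical_set_scope.
Local Open Scope ring_scope.

(* A directed graph E = (E^0, E^1, r, s); no countability assumed. *)
Record graph := Graph {
  vert : Type;
  edge : Type;
  rg : edge -> vert;
  sr : edge -> vert }.

Section GraphDefs.
Variable E : graph.

Definition singular (v : vert E) : Prop :=
  [set e : edge E | sr e = v] = set0 \/ ~ finite_set [set e : edge E | sr e = v].

(* finite path starting at vertex v with edge list p (p = [::] : the vertex v) *)
Fixpoint fpath (v : vert E) (p : seq (edge E)) : Prop :=
  match p with
  | [::] => True
  | e :: p' => sr e = v /\ fpath (rg e) p'
  end.

Fixpoint frange (v : vert E) (p : seq (edge E)) : vert E :=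
  match p with
  | [::] => v
  | e :: p' => frange (rg e) p'
  end.

Definition ipath (f : nat -> edge E) : Prop := forall n, rg (f n) = sr (f n.+1).

Inductive bpath : Type :=
  | BFin : vert E -> seq (edge E) -> bpath
  | BInf : (nat -> edge E) -> bpath.

Definition bnd (a : bpath) : Prop :=
  match a with
  | BFin v p => fpath v p /\ singular (frange v p)
  | BInf f => ipath f
  end.

Definition bsrc (a : bpath) : vert E :=
  match a with
  | BFin v _ => v
  | BInf f => sr (f 0%N)
  end.

Definition shift (a : bpath) : bpath :=
  match a with
  | BFin v [::] => BFin v [::]
  | BFin _ (e :: p) => BFin (rg e) p
  | BInf f => BInf (fun n => f n.+1)
  end.

Definition pcons (e : edge E) (a : bpath) : bpath :=
  match a with
  | BFin _ p => BFin (sr e) (e :: p)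
  | BInf f => BInf (fun n => if n is n'.+1 then f n' else e)
  end.

Definition ste (a b : bpath) : Prop :=
  exists m n : nat, iter m shift a = iter n shift b.

Definition cls (a : bpath) : set bpath := [set b | bnd b /\ ste a b].

(* The operators rho(p_v), rho(s_e), rho(s_e^* ) (resp. pi(...)) acting on
   coefficient functions bpath -> K (a vector sum_a f(a) a is encoded by f). *)
Section Ops.
Variable K : nzRingType.

Definition opP (v : vert E) (f : bpath -> K) : bpath -> K :=
  fun g => if `[< bnd g /\ bsrc g = v >] then f g else 0.

Definition opS (e : edge E) (f : bpath -> K) : bpath -> K :=
  fun g => if `[< exists g', bnd g' /\ bsrc g' = rg e /\ g = pcons e g' >]
           then f (shift g) else 0.

Definition opSs (e : edge E) (f : bpath -> K) : bpath -> K :=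
  fun g => if `[< bnd g /\ bsrc g = rg e >] then f (pcons e g) else 0.

(* Elements of the algebra generated by the p_v, s_e, s_e^*: every element
   of L_k(E) (and every element of the dense *-subalgebra of C^*(E)) is a
   K-linear combination of products of these generators. *)
Inductive gterm : Type :=
  | TP of vert E
  | TS of edge E
  | TSs of edge E
  | TZero
  | TAdd of gterm & gterm
  | TMul of gterm & gterm
  | TScale of K & gterm.

Fixpoint opT (t : gterm) (f : bpath -> K) : bpath -> K :=
  match t with
  | TP v => opP v f
  | TS e => opS e f
  | TSs e => opSs e f
  | TZero => fun _ => 0
  | TAdd t1 t2 => fun g => opT t1 f g + opT t2 f g
  | TMul t1 t2 => opT t1 (opT t2 f)
  | TScale c t1 => fun g => c * opT t1 f g
  end.
End Ops.

Section Alg.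
Variable k : fieldType.

Definition inV (A : set bpath) (f : bpath -> k) : Prop :=
  finite_set [set x | f x != 0] /\ (forall x, f x != 0 -> A x).

Definition klin (A B : set bpath) (T : (bpath -> k) -> (bpath -> k)) : Prop :=
  (forall f, inV A f -> inV B (T f)) /\
  (forall (c : k) f g, inV A f -> inV A g ->
      T (fun x => c * f x + g x) = (fun x => c * T f x + T g x)).

Definition kintertw (A : set bpath) (T : (bpath -> k) -> (bpath -> k)) : Prop :=
  forall (t : gterm k) f, inV A f -> T (opT t f) = opT t (T f).

Definition kHom (A B : set bpath) T : Prop := klin A B T /\ kintertw A T.
End Alg.

Section Hilb.
Variable R : realType.
Local Notation C := R[i].

Definition sqmod (z : C) : R := (complex.Re z) ^+ 2 + (complex.Im z) ^+ 2.

Definition sqn (f : bpath -> C) : \bar R :=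
  \esum_(x in [set: {classic bpath}]) (sqmod (f x))%:E.

Definition inH (A : set bpath) (f : bpath -> C) : Prop :=
  (sqn f < +oo)%E /\ (forall x, f x != 0 -> A x).

Definition blin (A B : set bpath) (T : (bpath -> C) -> (bpath -> C)) : Prop :=
  (forall f, inH A f -> inH B (T f)) /\
  (forall (c : C) f g, inH A f -> inH A g ->
      T (fun x => c * f x + g x) = (fun x => c * T f x + T g x)) /\
  (exists M : R, forall f, inH A f -> (sqn (T f) <= M%:E * sqn f)%E).

(* Op is pi(a) for some a in C^*(E): a bounded linear operator on l^2(boundary)
   that is an operator-norm limit of pi of elements of the *-algebra generated
   by the p_v, s_e (this *-algebra is dense in C^*(E)). *)
Definition inCstar (Op : (bpath -> C) -> (bpath -> C)) : Prop :=
  blin bnd bnd Op /\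
  forall eps : R, 0 < eps -> exists t : gterm C,
    forall f, inH bnd f ->
      (sqn (fun x => (Op f x - opT t f x)%R) <= eps%:E * sqn f)%E.

Definition cintertw (A : set bpath) (T : (bpath -> C) -> (bpath -> C)) : Prop :=
  forall Op, inCstar Op -> forall f, inH A f -> T (Op f) = Op (T f).

Definition cHom (A B : set bpath) T : Prop := blin A B T /\ cintertw A T.

Definition cUnitary (A : set bpath) T : Prop :=
  cHom A A T /\ (forall f, inH A f -> sqn (T f) = sqn f) /\
  (forall g, inH A g -> exists2 f, inH A f & T f = g).
End Hilb.

End GraphDefs.

(* Main.v *)
Require Import Defs.
From HB Require Import structures.
From mathcomp Require Import all_boot all_order all_algebra.
From mathcomp Require Import boolp classical_sets functions cardinality reals ereal esum.
From mathcomp Require Import complex.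
From mathcomp Require Import ring lra zify fsbigop.
Import Order.TTheory GRing.Theory Num.Theory.
Local Open Scope classical_set_scope.
Local Open Scope ring_scope.
Set Implicit Arguments.
Unset Strict Implicit.

Section Comb.
Variable E : graph.
Local Notation bp := (bpath E).
Local Notation sh := (@shift E).

Lemma shift_pcons e (a : bp) : bsrc a = rg e -> sh (pcons e a) = a.
Proof. by case: a => [v p|f] //= ->. Qed.

Lemma bsrc_pcons e (a : bp) : bsrc (pcons e a) = sr e.
Proof. by case: a. Qed.

Lemma bnd_pcons e (a : bp) : bnd a -> bsrc a = rg e -> bnd (pcons e a).
Proof.
case: a => [v p|f] /=.
  by move=> [fp sg] hv; subst v; split.
move=> ip he [|n] /=; [by rewrite he|exact: ip].
Qed.

Lemma bnd_shift (a : bp) : bnd a -> bnd (sh a).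
Proof.
case: a => [v [|e p]|f] //=.
  by move=> [[_ fp] sg]; split.
by move=> ip n; apply: ip.
Qed.

Lemma bnd_iter n (a : bp) : bnd a -> bnd (iter n sh a).
Proof. by elim: n => //= n IH /IH /bnd_shift. Qed.

Definition hd (a : bp) : option (edge E) :=
  match a with
  | BFin _ [::] => None
  | BFin _ (e :: _) => Some e
  | BInf f => Some (f 0%N)
  end.

Lemma hd_pcons e (a : bp) : hd (pcons e a) = Some e.
Proof. by case: a. Qed.

Lemma decomp (a : bp) e : bnd a -> hd a = Some e ->
  [/\ a = pcons e (sh a), bsrc (sh a) = rg e & sr e = bsrc a].
Proof.
case: a => [v [|e' p]|f] //=.
  by move=> [[se fp] _] [<-]; rewrite se.
move=> ip [<-]; split => //.
congr BInf; apply: funext => -[|n] //.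
Qed.

Lemma hd_none_shift (a : bp) : hd a = None -> sh a = a.
Proof. by case: a => [v [|e p]|f]. Qed.

Definition isPc e (g : bp) := exists g', bnd g' /\ bsrc g' = rg e /\ g = pcons e g'.

Lemma isPcE e g : isPc e g <-> bnd g /\ hd g = Some e.
Proof.
split.
  move=> [g' [bg' [sg' ->]]]; split; [exact: bnd_pcons|exact: hd_pcons].
move=> [bg hg]; have [d1 d2 _] := decomp bg hg.
exists (sh g); split; [exact: bnd_shift|split=> //].
Qed.

Definition opF (K : nzRingType) (P : bp -> Prop) (phi : bp -> bp) (f : bp -> K) : bp -> K :=
  fun g => if `[< P g >] then f (phi g) else 0.

Definition good (K : nzRingType) (t : gterm E K) (P : bp -> Prop) (phi : bp -> bp) :=
  [/\ forall f, opT t f = opF P phi f, forall g, P g -> bnd g &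
      forall g1 g2, P g1 -> P g2 -> phi g1 = phi g2 -> g1 = g2].

Variable K : nzRingType.

Lemma good_P v : good (TP K v) (fun g => bnd g /\ bsrc g = v) id.
Proof. by split => [f|g []|g1 g2 _ _]. Qed.

Lemma good_S e : good (TS K e) (isPc e) sh.
Proof.
split => // [g /isPcE []//|g1 g2 [g1' [_ [s1 ->]]] [g2' [_ [s2 ->]]]].
by rewrite !shift_pcons // => ->.
Qed.

Lemma good_Ss e : good (TSs K e) (fun g => bnd g /\ bsrc g = rg e) (pcons e).
Proof.
split => // [g []//|g1 g2 [_ s1] [_ s2] /(congr1 sh)].
by rewrite !shift_pcons.
Qed.

Lemma good_mul (t1 : gterm E K) P1 phi1 (t2 : gterm E K) P2 phi2 : good t1 P1 phi1 -> good t2 P2 phi2 ->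
  good (TMul t1 t2) (fun g => P1 g /\ P2 (phi1 g)) (phi2 \o phi1).
Proof.
move=> [e1 b1 i1] [e2 b2 i2]; split.
- move=> f /=; rewrite e1 e2; apply: funext => g; rewrite /opF.
  case: (asboolP (P1 g)) => p1; case: (asboolP (P2 (phi1 g))) => p2;
  case: (asboolP (P1 g /\ P2 (phi1 g))) => //; tauto.
- by move=> g [/b1].
- move=> g1 g2 [p1 q1] [p2 q2] /= h; apply: i1 => //; exact: i2.
Qed.

Lemma good_ext (t : gterm E K) P phi P' psi : good t P phi ->
  (forall g, P g <-> P' g) -> (forall g, P g -> phi g = psi g) -> good t P' psi.
Proof.
move=> [e b i] hP hphi; split.
- move=> f; rewrite e; apply: funext => g; rewrite /opF.
  case: (asboolP (P g)) => p; case: (asboolP (P' g)) => p' //.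
  + by rewrite hphi.
  + by exfalso; apply: p'; apply/hP.
  + by exfalso; apply: p; apply/hP.
- by move=> g /hP /b.
- move=> g1 g2 /hP p1 /hP p2; rewrite -!hphi //; exact: i.
Qed.

Definition Tproj e : gterm E K := TMul (TS K e) (TSs K e).

Lemma good_proj e : good (Tproj e) (isPc e) id.
Proof.
apply: good_ext (good_mul (good_S e) (good_Ss e)) _ _.
  move=> g; split; first by case.
  move=> h; split => //; have [bg hg] := (isPcE e g).1 h.
  have [_ s _] := decomp bg hg; split => //; exact: bnd_shift.
move=> g [h _]; have [bg hg] := (isPcE e g).1 h.
by have [E0 _ _] := decomp bg hg; rewrite /= -E0.
Qed.

Definition Tcomp v e : gterm E K := TAdd (TP K v) (TScale (-1) (Tproj e)).

Lemma good_comp v e : sr e = v ->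
  good (Tcomp v e) (fun g => bnd g /\ bsrc g = v /\ ~ isPc e g) id.
Proof.
move=> sev; have [e1 b1 i1] := good_proj e; split.
- move=> f; have -> : opT (Tcomp v e) f = fun g => opP v f g + (-1) * opT (Tproj e) f g by [].
  rewrite e1; apply: funext => g; rewrite /opF /opP /=.
  case: (asboolP (isPc e g)) => h.
    have [g' [bg' [sg' ->]]] := h.
    have -> : `[< bnd (pcons e g') /\ bsrc (pcons e g') = v >] = true.
      by apply/asboolT; split; [exact: bnd_pcons|rewrite bsrc_pcons].
    have -> : `[< bnd (pcons e g') /\ bsrc (pcons e g') = v /\ ~ isPc e (pcons e g') >] = false.
      by apply/asboolF => -[_ [_]]; apply; exists g'.
    by rewrite mulN1r subrr.
  rewrite mulr0 addr0.
  case: (asboolP (bnd g /\ bsrc g = v)) => p; case: (asboolP (bnd g /\ bsrc g = v /\ ~ isPc e g)) => p' //.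
    by exfalso; apply: p'; case: p.
  by exfalso; apply: p; case: p' => [? []].
- by move=> g [].
- by [].
Qed.

Lemma good_conj e (t : gterm E K) P : good t P id ->
  good (TMul (TS K e) (TMul t (TSs K e))) (fun g => isPc e g /\ P (sh g)) id.
Proof.
move=> gt.
apply: good_ext (good_mul (good_S e) (good_mul gt (good_Ss e))) _ _.
  move=> g; split; first by case=> [? []].
  move=> [h p]; split => //; split => //.
  have [bg hg] := (isPcE e g).1 h; have [_ s _] := decomp bg hg.
  split => //; exact: bnd_shift.
move=> g [h _]; have [bg hg] := (isPcE e g).1 h.
by have [E0 _ _] := decomp bg hg; rewrite /= -E0.
Qed.

Definition trans (x y : bp) :=
  exists (t : gterm E K) P phi, good t P phi /\ P y /\ phi y = x.

Lemma trans_refl x : bnd x -> trans x x.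
Proof. by move=> bx; exists (TP K (bsrc x)), (fun g => bnd g /\ bsrc g = bsrc x), id; split; [exact: good_P|]. Qed.

Lemma trans_trans x y z : trans x y -> trans y z -> trans x z.
Proof.
move=> [t2 [P2 [phi2 [g2 [p2 h2]]]]] [t1 [P1 [phi1 [g1 [p1 h1]]]]].
exists (TMul t1 t2), (fun g => P1 g /\ P2 (phi1 g)), (phi2 \o phi1).
split; first exact: good_mul.
by rewrite /= h1 h2.
Qed.

Lemma trans_up x : bnd x -> trans x (sh x).
Proof.
move=> bx; case hx: (hd x) => [e|]; last by rewrite hd_none_shift //; exact: trans_refl.
have [d1 d2 d3] := decomp bx hx.
exists (TSs K e), (fun g => bnd g /\ bsrc g = rg e), (pcons e); split; first exact: good_Ss.
by split => //; split => //; exact: bnd_shift.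
Qed.

Lemma trans_down x : bnd x -> trans (sh x) x.
Proof.
move=> bx; case hx: (hd x) => [e|]; last by rewrite hd_none_shift //; exact: trans_refl.
exists (TS K e), (isPc e), sh; split; first exact: good_S.
by split => //; apply/isPcE.
Qed.

Lemma trans_iter_up n x : bnd x -> trans x (iter n sh x).
Proof.
move=> bx; elim: n => [|n IH]; first exact: trans_refl.
apply: trans_trans IH _; apply: trans_up; exact: bnd_iter.
Qed.

Lemma trans_iter_down n x : bnd x -> trans (iter n sh x) x.
Proof.
move=> bx; elim: n => [|n IH]; first exact: trans_refl.
apply: trans_trans IH; apply: trans_down; exact: bnd_iter.
Qed.

Lemma trans_ste x y : bnd x -> bnd y -> ste x y -> trans x y.
Proof.
move=> bx by_ [m [n h]].
apply: trans_trans (trans_iter_up m bx) _; rewrite h; exact: trans_iter_down.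
Qed.

Definition sep (x w : bp) := exists (t : gterm E K) P, good t P id /\ P x /\ ~ P w.

Fixpoint pre n (x : bp) : seq (edge E) :=
  if n is n'.+1 then (if hd x is Some e then e :: pre n' (sh x) else [::]) else [::].

Lemma sep_n n : forall x w, bnd x -> pre n x <> pre n w -> sep x w.
Proof.
elim: n => [//|n IH] x w bx hpre.
case: (pselect (bnd w /\ bsrc w = bsrc x)) => hw; last first.
  exists (TP K (bsrc x)), (fun g => bnd g /\ bsrc g = bsrc x); split; first exact: good_P.
  by split.
case hx: (hd x) => [e|].
  case: (pselect (hd w = Some e)) => hwe.
    move: hpre => /=; rewrite hx hwe => hpre.
    have [t [P [gt [p1 p2]]]] : sep (sh x) (sh w).
      by apply: IH; [exact: bnd_shift|move=> h; apply: hpre; rewrite h].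
    exists (TMul (TS K e) (TMul t (TSs K e))), (fun g => isPc e g /\ P (sh g)).
    split; first exact: good_conj.
    split; first by split => //; apply/isPcE.
    by move=> [_ /p2].
  exists (Tproj e), (isPc e); split; first exact: good_proj.
  split; first by apply/isPcE.
  by move/isPcE => [_ h].
case hw': (hd w) => [e|]; last by move: hpre => /=; rewrite hx hw'.
have [_ _ d3] := decomp hw.1 hw'.
exists (Tcomp (bsrc x) e), (fun g => bnd g /\ bsrc g = bsrc x /\ ~ isPc e g).
split; first by apply: good_comp; rewrite d3 hw.2.
split; first by split => //; split => //; move/isPcE => [_]; rewrite hx.
by move=> [_ [_]]; apply; apply/isPcE; split => //; exact: hw.1.
Qed.

Lemma pre_fin n v p : pre n (BFin v p) = take n p.
Proof. by elim: n v p => [|n IH] v [|e p] //=; rewrite IH. Qed.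

Lemma size_pre_inf n f : size (pre n (BInf f)) = n.
Proof. by elim: n f => [|n IH] f //=; rewrite IH. Qed.

Lemma nth_pre_inf n f e0 k : (k < n)%N -> nth e0 (pre n (BInf f)) k = f k.
Proof. by elim: n f k => [|n IH] f [|k] //= /IH ->. Qed.

Lemma pre_diff x w : bsrc x = bsrc w -> x <> w -> exists n, pre n x <> pre n w.
Proof.
move=> hs hne; case: (pselect (exists n, pre n x <> pre n w)) => // hall.
exfalso; apply: hne.
have hall' : forall n, pre n x = pre n w.
  by move=> n; case: (pselect (pre n x = pre n w)) => // h; exfalso; apply: hall; exists n.
case: x w hs hall' {hall} => [v p|f] [v' q|g] /= hs h.
- have := h (size p + size q)%N; rewrite !pre_fin !take_oversize ?leq_addr ?leq_addl //.
  by move=> ->; rewrite hs.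
- have := congr1 size (h (size p).+1); rewrite pre_fin size_pre_inf size_take.
  by case: ltnP => hp e; lia.
- have := congr1 size (h (size q).+1); rewrite pre_fin size_pre_inf size_take.
  by case: ltnP => hp e; lia.
- congr BInf; apply: funext => k.
  have e := h k.+1.
  by rewrite -(@nth_pre_inf k.+1 f (f 0%N) k (ltnSn k)) e nth_pre_inf.
Qed.

Lemma sep_ne x w : bnd x -> x <> w -> sep x w.
Proof.
move=> bx hne.
case: (pselect (bnd w /\ bsrc w = bsrc x)) => hw; last first.
  exists (TP K (bsrc x)), (fun g => bnd g /\ bsrc g = bsrc x); split; first exact: good_P.
  by split.
have [n hn] := pre_diff (esym hw.2) hne.
exact: sep_n hn.
Qed.

Lemma sep_list (x : bp) (l : seq {classic bp}) : bnd x ->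
  exists (t : gterm E K) P, good t P id /\ P x /\ forall w, w \in l -> w <> x -> ~ P w.
Proof.
move=> bx; elim: l => [|a l [t [P [gt [px hl]]]]].
  exists (TP K (bsrc x)), (fun g => bnd g /\ bsrc g = bsrc x); split; first exact: good_P.
  by split.
case: (pselect (a = x)) => hax.
  exists t, P; split => //; split => // w; rewrite inE => /orP[/eqP -> //|]; exact: hl.
have [t' [P' [gt' [p1 p2]]]] := sep_ne bx (nesym hax).
exists (TMul t' t), (fun g => P' g /\ P g); split.
  apply: good_ext (good_mul gt' gt) _ _ => //.
split => // w; rewrite inE => /orP[/eqP -> _ []//|/hl h /h hP [_ //]].
Qed.

End Comb.
Section Ext.
Variable E : graph.
Local Notation bp := (bpath E).
Local Notation sh := (@shift E).

Definition delta (K : nzRingType) (x : bp) (c : K) : bp -> K :=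
  fun g => if `[< g = x >] then c else 0.

Lemma good_delta (K : nzRingType) (t : gterm E K) P phi x y c :
  good t P phi -> P y -> phi y = x -> opT t (delta x c) = delta y c.
Proof.
move=> [e b i] py hy; rewrite e; apply: funext => g; rewrite /opF /delta.
case: (asboolP (P g)) => pg; case: (asboolP (g = y)) => gy.
- by subst g; rewrite hy asboolT.
- case: (asboolP (phi g = x)) => // hx; exfalso; apply: gy; apply: i => //; by rewrite hx hy.
- by subst g.
- by [].
Qed.

Lemma opTZ (K : comNzRingType) (t : gterm E K) (z : K) f :
  opT t (fun x => z * f x) = fun x => z * opT t f x.
Proof.
elim: t f => [v|e|e||t1 IH1 t2 IH2|t1 IH1 t2 IH2|c t IH] f /=; apply: funext => g.
- by rewrite /opP; case: asboolP; rewrite ?mulr0.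
- by rewrite /opS; case: asboolP; rewrite ?mulr0.
- by rewrite /opSs; case: asboolP; rewrite ?mulr0.
- by rewrite mulr0.
- by rewrite IH1 IH2 mulrDr.
- by rewrite IH2 IH1.
- by rewrite IH mulrCA.
Qed.

Lemma ste_refl (a : bp) : ste a a.
Proof. by exists 0%N, 0%N. Qed.

Lemma ste_sym (a b : bp) : ste a b -> ste b a.
Proof. by move=> [m [n h]]; exists n, m. Qed.

Lemma ste_trans (a b c : bp) : ste a b -> ste b c -> ste a c.
Proof.
move=> [m [n h1]] [p [q h2]]; exists (p + m)%N, (n + q)%N.
by rewrite !iterD h1 -iterD addnC iterD h2 -iterD addnC iterD.
Qed.

Lemma cls_eq (a b : bp) : cls b a -> cls a = cls b.
Proof.
move=> [_ hba]; apply/seteqP; split => x [bx hx]; split => //.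
  exact: ste_trans hba hx.
exact: ste_trans (ste_sym hba) hx.
Qed.

Lemma cls_bnd (a : bp) x : cls a x -> bnd x.
Proof. by case. Qed.

Lemma cls_self (a : bp) : bnd a -> cls a a.
Proof. by move=> ba; split => //; exact: ste_refl. Qed.

Section PartA.
Variable k : fieldType.

Lemma inV0 (A : set bp) : inV A (fun _ => 0 : k).
Proof.
split; last by move=> x; rewrite eqxx.
by rewrite (_ : [set x | _] = set0) //; apply/seteqP; split => x //=; rewrite eqxx.
Qed.

Lemma inV_delta (A : set bp) y (c : k) : A y -> inV A (delta y c).
Proof.
move=> Ay; split.
  apply: (@sub_finite_set _ _ [set y]); last exact: finite_set1.
  by move=> x /=; rewrite /delta; case: asboolP => [-> //|_]; rewrite eqxx.
by move=> x; rewrite /delta; case: asboolP => [->|]; rewrite ?eqxx.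
Qed.

Lemma mainA (a : bp) (B : set bp) (T : (bp -> k) -> (bp -> k)) :
  bnd a -> (forall y, B y -> bnd y) -> kHom (cls a) B T ->
  (forall f, inV (cls a) f -> T f = fun x => T (delta a 1) a * f x) /\
  (T (delta a 1) a <> 0 -> B a).
Proof.
move=> ba bB [[TVB Tlin] Tint].
set A := cls a.
have T0 : T (fun _ => 0) = fun _ => 0.
  have := Tlin 1 _ _ (inV0 A) (inV0 A).
  rewrite (_ : (fun _ => 1 * 0 + 0) = (fun _ => 0 : k)); last by apply: funext => x; rewrite mulr0 addr0.
  move=> h; apply: funext => x; have := congr1 (fun F => F x) h; rewrite mul1r /=.
  by move=> hx; apply: (@addrI _ (T (fun=> 0) x)); rewrite addr0 -hx.
have KEY : forall f y, inV A f -> f y = 0 -> T f y = 0.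
  move=> f y fV fy.
  case: (pselect (bnd y)) => by_; last first.
    case: (eqVneq (T f y) 0) => // /(TVB f fV).2 /bB //.
  have [fin _] := fV.
  have [X hX] := (@finite_fsetP {classic bp} _).1 fin.
  have [t [P [gt [py hP]]]] := sep_list k (finmap.enum_fset X) by_.
  have [et _ _] := gt.
  have e0 : opT t f = fun _ => 0.
    rewrite et; apply: funext => g; rewrite /opF; case: asboolP => // pg.
    case: (eqVneq (f g) 0) => // fg.
    have : [set x | f x != 0] g by [].
    rewrite hX /= => gX.
    case: (pselect (g = y)) => [gy|gy]; first by subst g; rewrite fy.
    by exfalso; apply: (hP g gX gy).
  have := Tint t f fV; rewrite e0 T0 et => /(congr1 (fun F => F y)).
  by rewrite /opF /= asboolT.
set z := T (delta a 1) a.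
have Tda : T (delta a 1) = delta a z.
  apply: funext => w; rewrite {2}/delta; case: asboolP => [->//|wa].
  by apply: KEY; [exact: inV_delta (cls_self ba)|rewrite /delta asboolF].
have Tdy : forall y, A y -> T (delta y 1) = delta y z.
  move=> y [by_ hy]; have [t [P [phi [gt [py hphi]]]]] := trans_ste k ba by_ hy.
  rewrite -(good_delta 1 gt py hphi) Tint; last exact: inV_delta (cls_self ba).
  by rewrite Tda (good_delta z gt py hphi).
split; last first.
  move=> hz; have [_ h] := TVB _ (inV_delta 1 (cls_self ba)).
  by apply: h; apply/eqP.
move=> f fV; apply: funext => y.
case: (eqVneq (f y) 0) => fy.
  by rewrite fy mulr0; apply: KEY.
have Ay : A y by exact: fV.2 _ fy.
pose h := fun x => f x - f y * delta y 1 x.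
have hV : inV A h.
  have sub : [set x | h x != 0] `<=` [set x | f x != 0].
    move=> x /=; rewrite /h /delta; case: asboolP => [->|_]; first by rewrite mulr1 subrr eqxx.
    by rewrite mulr0 subr0.
  split; first exact: sub_finite_set sub fV.1.
  by move=> x /sub /fV.2.
have fE : f = fun x => f y * delta y 1 x + h x.
  by apply: funext => x; rewrite /h addrC subrK.
rewrite {1}fE Tlin //; last exact: inV_delta.
rewrite Tdy // (KEY h y hV); last by rewrite /h /delta (asboolT (erefl y)) mulr1 subrr.
by rewrite /delta (asboolT (erefl y)) addr0 mulrC.
Qed.

End PartA.
End Ext.
Section PartB.
Variable E : graph.
Local Notation bp := (bpath E).
Variable R : realType.
Local Notation C := R[i].
Lemma sqmodM (z w : C) : sqmod (z * w) = (sqmod z * sqmod w)%R.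
Proof. case: z => a b; case: w => c d. rewrite /sqmod /=. ring. Qed.
Lemma sqmod_ge0 (z : C) : (0 <= sqmod z)%R.
Proof. by rewrite /sqmod addr_ge0 // sqr_ge0. Qed.
Lemma sqmod_eq0 (z : C) : sqmod z = 0%R -> z = 0%R.
Proof. case: z => a b; rewrite /sqmod /= => /eqP. rewrite paddr_eq0 ?sqr_ge0 // !sqrf_eq0 => /andP[/eqP-> /eqP->]. by []. Qed.
Lemma sqmod1 : sqmod (1 : C) = 1%R.
Proof. by rewrite /sqmod /= expr0n /= addr0 expr1n. Qed.
Lemma sqmod0 : sqmod (0 : C) = 0%R.
Proof. by rewrite /sqmod /= expr0n /= addr0. Qed.

Local Open Scope ereal_scope.

Lemma sqn_ge0 (f : bp -> C) : 0 <= sqn f.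
Proof. by apply: esum_ge0 => x _; rewrite lee_fin sqmod_ge0. Qed.

Lemma sqn_le (f g : bp -> C) : (forall x, sqmod (f x) <= sqmod (g x))%R -> sqn f <= sqn g.
Proof. by move=> h; apply: le_esum => x _; rewrite lee_fin. Qed.

Lemma sqn_pt (f : bp -> C) y : (sqmod (f y))%:E <= sqn f.
Proof.
rewrite /sqn; apply: esum_ge; exists [set (y : {classic bp})]; first by split; [exact: finite_set1|].
by rewrite fsbig_set1.
Qed.

Lemma sqn_delta (y : bp) (c : C) : sqn (delta y c) = (sqmod c)%:E.
Proof.
rewrite /sqn (eq_esum (b := fun x => if x \in [set (y : {classic bp})] then (sqmod c)%:E else 0%E)); last first.
  move=> x _; rewrite /delta; case: asboolP => [->|nx]; first by rewrite mem_set.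
  by rewrite memNset // sqmod0.
by rewrite -esum_mkcond esum_set1 // lee_fin sqmod_ge0.
Qed.

Lemma sqn_opF (P : set bp) phi (f : bp -> C) :
  (forall g1 g2, P g1 -> P g2 -> phi g1 = phi g2 -> g1 = g2) -> sqn (opF P phi f) <= sqn f.
Proof.
move=> inj; rewrite /sqn.
rewrite (eq_esum (b := fun x => if x \in (P : set {classic bp}) then (sqmod (f (phi x)))%:E else 0%E)); last first.
  move=> x _; rewrite /opF; case: asboolP => h; first by rewrite mem_set.
  by rewrite memNset // sqmod0.
rewrite -esum_mkcond -(@esum_image R {classic bp} {classic bp} (P : set {classic bp}) phi (fun x => (sqmod (f x))%:E)); last first.
  by move=> x y /set_mem px /set_mem py; exact: inj.
rewrite esum_mkcond; apply: le_esum => x _; case: ifP => _ //.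
by rewrite lee_fin sqmod_ge0.
Qed.

Lemma sqn_scale (z : C) (f : bp -> C) : sqn (fun x => z * f x)%R <= (sqmod z)%:E * sqn f.
Proof.
rewrite {1}/sqn /esum; apply: ge_ereal_sup => _ [X XS <-] /=.
rewrite (eq_fsbigr (fun x : {classic bp} => (sqmod z)%:E * (sqmod (f x))%:E)); last by move=> x _; rewrite sqmodM EFinM.
rewrite -ge0_mule_fsumr; last by move=> x; rewrite lee_fin sqmod_ge0.
apply: lee_wpmul2l; first by rewrite lee_fin sqmod_ge0.
by apply: ereal_sup_ubound; exists X.
Qed.

End PartB.
Section PartB2.
Variable E : graph.
Local Notation bp := (bpath E).
Variable R : realType.
Local Notation C := R[i].
Local Open Scope ereal_scope.

Lemma tail (f : bp -> C) (eps : R) : sqn f < +oo -> (0 < eps)%R ->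
  exists X : finmap.finset_of (Phant {classic bp}),
  forall g : bp -> C, (forall x, sqmod (g x) <= if x \in finmap.enum_fset X then 0 else sqmod (f x))%R ->
    sqn g <= eps%:E.
Proof.
move=> sf e0.
have sfin : sqn f \is a fin_num by rewrite ge0_fin_numE // sqn_ge0.
have : sqn f - eps%:E < sqn f.
  by rewrite -(fineK sfin) -EFinB lte_fin; lra.
rewrite {2}/sqn /esum => /ereal_sup_gt [_ [Y [finY _] <-]] hY.
have [X hX] := (@finite_fsetP {classic bp} _).1 finY.
exists X => g hg.
set a := fun x : {classic bp} => (sqmod (f x))%:E.
set r := \esum_(x in [set: {classic bp}]) (if x \in finmap.enum_fset X then 0%R else sqmod (f x))%:E.
have hr : sqn g <= r.
  by apply: le_esum => x _; rewrite lee_fin.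
apply: le_trans hr _.
have hsplit := esumID Y [set: {classic bp}] a (fun x _ => sqmod_ge0 _).
have e1 : \esum_(x in [set: {classic bp}] `&` Y) a x = \sum_(x \in Y) a x.
  by rewrite setTI esum_fset // => x _; rewrite lee_fin sqmod_ge0.
have e2 : \esum_(x in [set: {classic bp}] `&` ~` Y) a x = r.
  rewrite esum_mkcondr; apply: eq_esum => x _.
  rewrite /a; case: (boolP (x \in finmap.enum_fset X)) => hx.
    by rewrite memNset //= hX /=.
  by rewrite mem_set //= hX /=; apply/negP.
rewrite /sqn -/a in sfin hY.
rewrite /sqn -/a e1 e2 in hsplit.
have S0 : 0 <= \sum_(x \in Y) a x by apply: fsume_ge0 => x _; rewrite lee_fin sqmod_ge0.
have r0 : 0 <= r by apply: esum_ge0 => x _; rewrite lee_fin; case: ifP => _ //; exact: sqmod_ge0.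
have Sfin : \sum_(x \in Y) a x \is a fin_num.
  rewrite ge0_fin_numE //; apply: le_lt_trans sf; rewrite /sqn -/a hsplit leeDl //.
have rfin : r \is a fin_num.
  rewrite ge0_fin_numE //; apply: le_lt_trans sf; rewrite /sqn -/a hsplit leeDr //.
move: hsplit hY; rewrite -(fineK sfin) -(fineK Sfin) -(fineK rfin) -EFinD -EFinB.
move=> hs0; have hs := EFin_inj hs0; rewrite !lte_fin lee_fin; lra.
Qed.

End PartB2.
Section PartB3.
Variable E : graph.
Local Notation bp := (bpath E).
Variable R : realType.
Local Notation C := R[i].

Lemma sqn0 : sqn (fun _ : bp => 0 : C) = 0%E.
Proof. by rewrite /sqn esum1 // => x _; rewrite sqmod0. Qed.

Lemma inH0 (A : set bp) : inH A (fun _ => 0 : C).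
Proof. by split; [rewrite sqn0 ltry|move=> x; rewrite eqxx]. Qed.

Lemma inH_delta (A : set bp) y (c : C) : A y -> inH A (delta y c).
Proof.
move=> Ay; split; first by rewrite sqn_delta ltry.
by move=> x; rewrite /delta; case: asboolP => [->|]; rewrite ?eqxx.
Qed.

Lemma inH_sub (A B : set bp) f : A `<=` B -> inH (R:=R) A f -> inH B f.
Proof. by move=> AB [s h]; split => // x /h /AB. Qed.

Lemma lin0 (S : set bp) (Op : (bp -> C) -> bp -> C) :
  (forall (c : C) f g, inH S f -> inH S g ->
      Op (fun x => c * f x + g x) = (fun x => c * Op f x + Op g x)) ->
  Op (fun _ => 0) = fun _ => 0.
Proof.
move=> lin; have := lin 1 _ _ (inH0 S) (inH0 S).
rewrite (_ : (fun _ => 1 * 0 + 0) = (fun _ => 0 : C)); last by apply: funext => x; rewrite mulr0 addr0.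
move=> h; apply: funext => x; have := congr1 (fun F => F x) h; rewrite mul1r /=.
by move=> hx; apply: (@addrI _ (Op (fun=> 0) x)); rewrite addr0 -hx.
Qed.

Lemma linZ (S : set bp) (Op : (bp -> C) -> bp -> C) (z : C) f :
  (forall (c : C) f g, inH S f -> inH S g ->
      Op (fun x => c * f x + g x) = (fun x => c * Op f x + Op g x)) ->
  inH S f -> Op (fun x => z * f x) = fun x => z * Op f x.
Proof.
move=> lin fS; have := lin z f _ fS (inH0 S); rewrite (lin0 lin).
rewrite (_ : (fun x => z * f x + 0) = (fun x => z * f x)); last by apply: funext => x; rewrite addr0.
by move=> ->; apply: funext => x; rewrite addr0.
Qed.

Lemma good_inCstar (t : gterm E C) P phi : good t P phi -> inCstar (opT t).
Proof.
move=> gt; have [et bt it] := gt.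
have key : forall f, (sqn (opT t f) <= sqn f)%E by move=> f; rewrite et; apply: sqn_opF.
split.
  split; [|split].
  - move=> f [sf _]; split; first exact: le_lt_trans (key f) sf.
    move=> x; rewrite et /opF; case: asboolP => [px _|_]; [exact: bt|by rewrite eqxx].
  - move=> c f g _ _; rewrite !et; apply: funext => x; rewrite /opF.
    by case: asboolP => _ //; rewrite mulr0 addr0.
  - by exists 1%R => f _; rewrite mul1e; exact: key.
move=> eps e0; exists t => f _.
rewrite (_ : (fun x => _) = fun _ => 0%R); last by apply: funext => x; rewrite subrr.
by rewrite sqn0 mule_ge0 ?sqn_ge0 // lee_fin ltW.
Qed.

Lemma mainB (a : bp) (B : set bp) (T : (bp -> C) -> (bp -> C)) :
  bnd a -> (forall y, B y -> bnd y) -> cHom (cls a) B T ->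
  (forall f, inH (cls a) f -> T f = fun x => T (delta a 1) a * f x) /\
  (T (delta a 1) a <> 0 -> B a).
Proof.
move=> ba bB [[THB [Tlin [M TM]]] Tint].
set A := cls a.
have T0 := lin0 Tlin.
have KEY : forall f y, inH A f -> f y = 0 -> T f y = 0.
  move=> f y fV fy.
  case: (pselect (bnd y)) => by_; last first.
    case: (eqVneq (T f y) 0) => // /(THB f fV).2 /bB //.
  apply: sqmod_eq0; apply/eqP; rewrite eq_le sqmod_ge0 andbT.
  apply/ler_addgt0Pr => e e0; rewrite add0r.
  set eps := e / (`|M| + 1).
  have M1 : (0 < `|M| + 1)%R by rewrite ltr_pwDr.
  have eps0 : (0 < eps)%R by rewrite divr_gt0.
  have epsE : (eps * (`|M| + 1) = e)%R by rewrite /eps mulfVK // gt_eqF.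
  have [X hX] := tail fV.1 eps0.
  have [t [P [gt [py hP]]]] := sep_list C (finmap.enum_fset X) by_.
  have [et _ _] := gt.
  have QV : inH A (opT t f).
    split; first by apply: le_lt_trans fV.1; rewrite et; apply: sqn_opF => g1 g2 _ _.
    move=> x; rewrite et /opF; case: asboolP => _; last by rewrite eqxx.
    exact: fV.2.
  have hq : (sqn (opT t f) <= eps%:E)%E.
    apply: hX => x; rewrite et /opF; case: asboolP => px; case: ifP => hx //.
    - case: (pselect (x = y)) => [xy|xy]; last by exfalso; exact: hP x hx xy px.
      by rewrite xy fy sqmod0.
    - by rewrite sqmod0.
    - by rewrite sqmod0 sqmod_ge0.
  have e1 : T f y = T (opT t f) y.
    by rewrite (Tint _ (good_inCstar gt) f fV) et /opF asboolT.
  have h1 := sqn_pt (T (opT t f)) y.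
  have h2 := TM _ QV.
  have q0 := sqn_ge0 (opT t f).
  have qfin : sqn (opT t f) \is a fin_num by rewrite ge0_fin_numE // (le_lt_trans hq) ?ltry.
  move: h1 h2 hq q0; rewrite -(fineK qfin) -EFinM !lee_fin -e1 => h1 h2 hq q0.
  have hM : (M <= `|M|)%R by exact: ler_norm.
  have hM0 : (0 <= `|M|)%R by [].
  have h3 := le_trans h1 h2; rewrite lee_fin in h3.
  move: h3 hq q0; set q := fine _ => h3 hq q0.
  have p1 : (0 <= (`|M| - M) * q)%R by apply: mulr_ge0 => //; rewrite subr_ge0.
  have p2 : (0 <= `|M| * (eps - q))%R by apply: mulr_ge0 => //; rewrite subr_ge0.
  nra.
set z := T (delta a 1) a.
have Tda : T (delta a 1) = delta a z.
  apply: funext => w; rewrite {2}/delta; case: asboolP => [->//|wa].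
  by apply: KEY; [exact: inH_delta (cls_self ba)|rewrite /delta asboolF].
have Tdy : forall y, A y -> T (delta y 1) = delta y z.
  move=> y [by_ hy]; have [t [P [phi [gt [py hphi]]]]] := trans_ste C ba by_ hy.
  rewrite -(good_delta 1 gt py hphi) Tint; [|exact: good_inCstar gt|exact: inH_delta (cls_self ba)].
  by rewrite Tda (good_delta z gt py hphi).
split; last first.
  move=> hz; have [_ h] := THB _ (inH_delta 1 (cls_self ba)).
  by apply: h; apply/eqP.
move=> f fV; apply: funext => y.
case: (eqVneq (f y) 0) => fy.
  by rewrite fy mulr0; apply: KEY.
have Ay : A y by exact: fV.2 _ fy.
pose h := fun x => f x - f y * delta y 1 x.
have hV : inH A h.
  have sub : forall x, h x != 0 -> f x != 0.
    move=> x; rewrite /h /delta; case: asboolP => [->|_]; first by rewrite mulr1 subrr eqxx.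
    by rewrite mulr0 subr0.
  split; last by move=> x /sub /fV.2.
  apply: le_lt_trans fV.1; apply: sqn_le => x; rewrite /h /delta.
  case: asboolP => [->|_]; first by rewrite mulr1 subrr sqmod0 sqmod_ge0.
  by rewrite mulr0 subr0.
have fE : f = fun x => f y * delta y 1 x + h x.
  by apply: funext => x; rewrite /h addrC subrK.
rewrite {1}fE Tlin //; last exact: inH_delta.
rewrite Tdy // (KEY h y hV); last by rewrite /h /delta (asboolT (erefl y)) mulr1 subrr.
by rewrite /delta (asboolT (erefl y)) addr0 mulrC.
Qed.

End PartB3.
Lemma deltaZ (E : graph) (K : nzRingType) (a : bpath E) (z : K) :
  (fun x => z * delta a 1 x) = delta a z.
Proof. by apply: funext => x; rewrite /delta; case: asboolP; rewrite ?mulr1 ?mulr0. Qed.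

Lemma delta_at (E : graph) (K : nzRingType) (a : bpath E) (z : K) : delta a z a = z.
Proof. by rewrite /delta asboolT. Qed.

Theorem proposition3p13 (E : graph) :
  (* (a): Leavitt path algebra L_k(E), representations on V_([alpha],k) *)
  ((forall (k : fieldType) (a b : bpath E) (T : (bpath E -> k) -> (bpath E -> k)),
      bnd a -> bnd b -> kHom (cls a) (cls b) T ->
      (exists f, inV (cls a) f /\ T f <> (fun _ => 0)) ->
      cls a = cls b /\
      exists z : k, forall f, inV (cls a) f -> T f = (fun x => z * f x)) /\
   (forall (k : fieldType) (a b : bpath E),
      bnd a -> bnd b -> cls a <> cls b ->
      (* End_{L_k(E)} V_([a],k) = k Id, via the bijection z |-> z Id *)
      ((forall z : k, kHom (cls a) (cls a) (fun f x => z * f x)) /\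
       (forall T : (bpath E -> k) -> (bpath E -> k), kHom (cls a) (cls a) T ->
          exists! z : k, forall f, inV (cls a) f -> T f = (fun x => z * f x))) /\
      (* Hom_{L_k(E)}(V_([a],k), V_([b],k)) = {0} *)
      (forall T : (bpath E -> k) -> (bpath E -> k), kHom (cls a) (cls b) T ->
          forall f, inV (cls a) f -> T f = (fun _ => 0)))) /\
  (* (b): graph C*-algebra C^*(E), representations on H_[alpha] = l^2([alpha]) *)
  ((forall (R : realType) (a b : bpath E) (T : (bpath E -> R[i]) -> (bpath E -> R[i])),
      bnd a -> bnd b -> cHom (cls a) (cls b) T ->
      (exists f, inH (cls a) f /\ T f <> (fun _ => 0)) ->
      cls a = cls b /\
      exists z : R[i], forall f, inH (cls a) f -> T f = (fun x => z * f x)) /\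
   (forall (R : realType) (a b : bpath E),
      bnd a -> bnd b -> cls a <> cls b ->
      (* End_{C^*(E)} H_[a] = C Id, via the bijection z |-> z Id *)
      ((forall z : R[i], cHom (cls a) (cls a) (fun f x => z * f x)) /\
       (forall T : (bpath E -> R[i]) -> (bpath E -> R[i]), cHom (cls a) (cls a) T ->
          exists! z : R[i], forall f, inH (cls a) f -> T f = (fun x => z * f x))) /\
      (* Unitary_{C^*(E)} H_[a] = T Id, via the bijection z |-> z Id, |z| = 1 *)
      ((forall z : R[i], sqmod z = 1 -> cUnitary (cls a) (fun f x => z * f x)) /\
       (forall U : (bpath E -> R[i]) -> (bpath E -> R[i]), cUnitary (cls a) U ->
          exists! z : R[i], sqmod z = 1 /\
            forall f, inH (cls a) f -> U f = (fun x => z * f x))) /\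
      (* Hom_{C^*(E)}(H_[a], H_[b]) = {0} *)
      (forall T : (bpath E -> R[i]) -> (bpath E -> R[i]), cHom (cls a) (cls b) T ->
          forall f, inH (cls a) f -> T f = (fun _ => 0)))).
Proof.
have cb : forall (a : bpath E), cls a `<=` @bnd E by move=> a x [].
split; split.
- move=> k a b T ba bb hT [f [fV hf]].
  have [h1 h2] := mainA ba (cb b) hT.
  case: (eqVneq (T (delta a 1) a) 0) => hz.
    by exfalso; apply: hf; rewrite (h1 f fV) hz; apply: funext => x; rewrite mul0r.
  move/eqP: hz => /h2 hb; split; first exact: cls_eq.
  by exists (T (delta a 1) a).
- move=> k a b ba bb hne; split; [split|].
  + move=> z; split; [split|].
    * move=> f [fin fs]; split.
        apply: sub_finite_set fin => x /=; apply: contra => /eqP ->; by rewrite mulr0.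
      by move=> x hx; apply: fs; move: hx; apply: contra => /eqP ->; rewrite mulr0.
    * by move=> c f g _ _; apply: funext => x; rewrite mulrDr mulrCA.
    * by move=> t f _; rewrite opTZ.
  + move=> T hT; have [h1 _] := mainA ba (cb a) hT.
    exists (T (delta a 1) a); split; first exact: h1.
    move=> z' hz'; have := congr1 (fun F => F a) (hz' _ (inV_delta 1 (cls_self ba))).
    by rewrite /= delta_at mulr1.
  + move=> T hT f fV; have [h1 h2] := mainA ba (cb b) hT.
    case: (eqVneq (T (delta a 1) a) 0) => hz.
      by rewrite h1 // hz; apply: funext => x; rewrite mul0r.
    by exfalso; apply: hne; apply: cls_eq; apply: h2; apply/eqP.
- move=> R a b T ba bb hT [f [fV hf]].
  have [h1 h2] := mainB ba (cb b) hT.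
  case: (eqVneq (T (delta a 1) a) 0) => hz.
    by exfalso; apply: hf; rewrite (h1 f fV) hz; apply: funext => x; rewrite mul0r.
  move/eqP: hz => /h2 hb; split; first exact: cls_eq.
  by exists (T (delta a 1) a).
- move=> R a b ba bb hne.
  have End : forall z : R[i], cHom (cls a) (cls a) (fun f x => z * f x).
    move=> z; split; [split; [|split]|].
    * move=> f [sf fs]; split.
        apply: le_lt_trans (sqn_scale z f) _.
        have sfin : sqn f \is a fin_num by rewrite ge0_fin_numE // sqn_ge0.
        by rewrite -(fineK sfin) -EFinM ltry.
      by move=> x hx; apply: fs; move: hx; apply: contra => /eqP ->; rewrite mulr0.
    * by move=> c f g _ _; apply: funext => x; rewrite mulrDr mulrCA.
    * by exists (sqmod z) => f _; exact: sqn_scale.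
    * move=> Op [[OpH [Oplin _]] _] f fV.
      by rewrite (linZ z Oplin) //; exact: inH_sub (cb a) fV.
  split; [split|split; [split|]].
  + exact: End.
  + move=> T hT; have [h1 _] := mainB ba (cb a) hT.
    exists (T (delta a 1) a); split; first exact: h1.
    move=> z' hz'; have := congr1 (fun F => F a) (hz' _ (inH_delta 1 (cls_self ba))).
    by rewrite /= delta_at mulr1.
  + move=> z hz; split; first exact: End.
    have z0 : z != 0.
      by apply/eqP => z0; move: hz; rewrite z0 sqmod0 => /esym/eqP; rewrite oner_eq0.
    have hzi : sqmod z^-1 = 1.
      by have := sqmodM z^-1 z; rewrite mulVf // sqmod1 hz mulr1.
    split.
      by move=> f _; rewrite /sqn; apply: eq_esum => x _; rewrite sqmodM hz mul1r.
    move=> g [sg gs]; exists (fun x => z^-1 * g x).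
      split.
        by rewrite (_ : sqn _ = sqn g) //; rewrite /sqn; apply: eq_esum => x _; rewrite sqmodM hzi mul1r.
      by move=> x hx; apply: gs; move: hx; apply: contra => /eqP ->; rewrite mulr0.
    by apply: funext => x; rewrite mulrA mulfV // mul1r.
  + move=> U [hU [hn _]]; have [h1 _] := mainB ba (cb a) hU.
    exists (U (delta a 1) a); split.
      split => //.
      have e := hn _ (inH_delta 1 (cls_self ba)).
      rewrite (h1 _ (inH_delta 1 (cls_self ba))) deltaZ !sqn_delta sqmod1 in e.
      exact: EFin_inj e.
    move=> z' [_ hz']; have := congr1 (fun F => F a) (hz' _ (inH_delta 1 (cls_self ba))).
    by rewrite /= delta_at mulr1.
  + move=> T hT f fV; have [h1 h2] := mainB ba (cb b) hT.
    case: (eqVneq (T (delta a 1) a) 0) => hz.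
      by rewrite h1 // hz; apply: funext => x; rewrite mul0r.
    by exfalso; apply: hne; apply: cls_eq; apply: h2; apply/eqP.
Qed.
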